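(* Let $D$ be a strongly connected digraph, $T$ a DFS tree of $D$ rooted at $r$, and $H$ a connected subdigraph of $T$. Let $G_H$ be the undirected graph with vertex set $V(H)$ in which $uv$ is an edge whenever $D$ has a backward arc (with respect to $T$) from $u$ to $v$ or from $v$ to $u$. Then $\chi_A(D\langle V(H)\rangle)\le \chi(G_H)$.
   Context: Digraphs are finite and loopless; paths and cycles are directed. $D\langle U\rangle$ denotes the subdigraph of $D$ induced by $U\subseteq V(D)$. $\chi$ is the usual chromatic number of an undirected graph. A set of vertices is acyclic if it induces no directed cycle; $\chi_A$ is the minimum number of colors in a coloring whose color classes are all acyclic. A DFS tree $T$ of a strongly connected digraph $D$ rooted at $r$ is the spanning out-branching of $D$ produced by a depth-first search of $D$ started at $r$. A vertex $v$ is a descendant of $u$ (and $u$ an ancestor of $v$) if $T$ contains a directed $uv$-path. An arc $(u,v)$ of $D$ is a backward arc if $u$ is a descendant of $v$. *)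

(* Defs.v *)
From mathcomp Require Import all_boot.
Set Implicit Arguments. Unset Strict Implicit. Unset Printing Implicit Defensive.

Section Digraphs.
Variable V : finType.
Variable arc : rel V.

Definition loopless : Prop := forall x, ~~ arc x x.

Definition strongly_connected : Prop := forall x y, connect arc x y.

Definition out_nbrs (u : V) : seq V := [seq w <- enum V | arc u w].

(* Nondeterministic depth-first search.
   [dfs_from vis u vis' t] : starting DFS at u (u not yet visited) with visited
   list [vis], u is marked visited, its out-neighbours are scanned in an
   arbitrary order, each unvisited one is explored recursively (adding the
   tree arc); the final visited list is [vis'] and the tree arcs produced
   are [t].  [dfs_list vis u ns vis' t] scans the remaining neighbours [ns]
   of u. *)
Inductive dfs_from : seq V -> V -> seq V -> seq (V * V) -> Prop :=
| DfsFrom vis u ns vis' t :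
    perm_eq ns (out_nbrs u) ->
    dfs_list (u :: vis) u ns vis' t ->
    dfs_from vis u vis' t
with dfs_list : seq V -> V -> seq V -> seq V -> seq (V * V) -> Prop :=
| DfsNil vis u : dfs_list vis u [::] vis [::]
| DfsSeen vis u w ns vis' t :
    w \in vis -> dfs_list vis u ns vis' t -> dfs_list vis u (w :: ns) vis' t
| DfsNew vis u w ns vis1 t1 vis2 t2 :
    w \notin vis -> dfs_from vis w vis1 t1 -> dfs_list vis1 u ns vis2 t2 ->
    dfs_list vis u (w :: ns) vis2 ((u, w) :: t1 ++ t2).

Definition is_DFS_tree (r : V) (T : rel V) : Prop :=
  exists vis t, dfs_from [::] r vis t /\ forall x y, T x y = ((x, y) \in t).

Definition descendant (T : rel V) (v u : V) : bool := connect T u v.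

Definition backward_arc (T : rel V) (u v : V) : bool :=
  arc u v && descendant T u v.

Definition connected_subdigraph (T : rel V) (VH : {set V}) (EH : rel V) : Prop :=
  (forall x y, EH x y -> [&& T x y, x \in VH & y \in VH]) /\
  (forall x y, x \in VH -> y \in VH ->
     connect [rel a b | EH a b || EH b a] x y).

Definition GH_edge (T : rel V) (VH : {set V}) (u v : V) : bool :=
  [&& u \in VH, v \in VH & backward_arc T u v || backward_arc T v u].

Definition proper_coloring (S : {set V}) (e : rel V) (k : nat) (f : V -> nat) : Prop :=
  (forall x, x \in S -> f x < k) /\
  (forall x y, x \in S -> y \in S -> e x y -> f x != f y).

Definition induced_arc (S : {set V}) : rel V :=
  [rel a b | [&& a \in S, b \in S & arc a b]].

Definition acyclic_set (S : {set V}) : bool :=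
  ~~ [exists x, exists y, induced_arc S x y && connect (induced_arc S) y x].

Definition acyclic_coloring (S : {set V}) (k : nat) (f : V -> nat) : Prop :=
  (forall x, x \in S -> f x < k) /\
  (forall i, acyclic_set [set x in S | f x == i]).

Definition is_chromatic_number (S : {set V}) (e : rel V) (n : nat) : Prop :=
  (exists f, proper_coloring S e n f) /\
  (forall m f, proper_coloring S e m f -> n <= m).

Definition is_acyclic_chromatic_number (S : {set V}) (n : nat) : Prop :=
  (exists f, acyclic_coloring S n f) /\
  (forall m f, acyclic_coloring S m f -> n <= m).

End Digraphs.

(* Main.v *)
Require Import Defs.
From mathcomp Require Import all_boot.

Set Implicit Arguments. Unset Strict Implicit. Unset Printing Implicit Defensive.

Scheme dfs_from_mind := Induction for dfs_from Sort Prop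
  with dfs_list_mind := Induction for dfs_list Sort Prop.

Section Aux.
Variable V : finType.
Variable arc : rel V.

Definition trel (t : seq (V * V)) : rel V := fun a b => (a, b) \in t.

Definition Inv (vis vis' : seq V) (t : seq (V * V)) (p : seq V) (root : V) : Prop :=
  [/\ (forall x, (x \in vis') = (x \in vis) || (x \in p)),
      (forall x, x \in p -> x \notin vis),
      (forall x, x \in p -> connect (trel t) root x) &
      (forall x y, x \in p -> arc x y ->
         (y \in vis) || ((y \in p) && (connect (trel t) y x || (index y p < index x p))))].

Lemma trel_mono (t t' : seq (V * V)) : {subset t <= t'} ->
  forall x y, connect (trel t) x y -> connect (trel t') x y.
Proof.
move=> sub; apply: connect_sub => x y h; apply: connect1; exact: sub.
Qed.

Definition Pf vis u vis' t (_ : dfs_from arc vis u vis' t) : Prop :=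
  u \notin vis -> exists p, Inv vis vis' t p u /\ u \in p.
Definition Pl vis u ns vis' t (_ : dfs_list arc vis u ns vis' t) : Prop :=
  exists p, Inv vis vis' t p u /\ {subset ns <= vis'}.

Lemma dfs_inv :
  (forall vis u vis' t d, @Pf vis u vis' t d) /\
  (forall vis u ns vis' t d, @Pl vis u ns vis' t d).
Proof.
pose proof (fun c1 c2 c3 c4 => conj (@dfs_from_mind V arc (@Pf) (@Pl) c1 c2 c3 c4)
   (@dfs_list_mind V arc (@Pf) (@Pl) c1 c2 c3 c4)) as K.
apply: K; rewrite /Pf /Pl.
- move=> vis u ns vis' t pns _ [p [[Hm Hd Hc Ha] Hs]] uvis.
  exists (rcons p u); split; last by rewrite mem_rcons mem_head.
  have unp : u \notin p by apply/negP => /Hd; rewrite mem_head.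
  split.
  + move=> x; rewrite Hm in_cons mem_rcons in_cons.
    by case: (x == u); rewrite ?orbT //.
  + move=> x; rewrite mem_rcons in_cons => /orP[/eqP -> //|/Hd].
    by rewrite in_cons negb_or => /andP[].
  + move=> x; rewrite mem_rcons in_cons => /orP[/eqP -> |/Hc //].
    exact: connect0.
  + move=> x y; rewrite mem_rcons in_cons -cats1 => /orP[/eqP -> |xp] axy.
    * have : y \in vis' by apply: Hs; rewrite (perm_mem pns) mem_filter axy mem_enum.
      rewrite Hm in_cons => /orP[/orP[/eqP -> | -> //] | yp].
      - by rewrite mem_cat mem_head orbT connect0 /= orbT.
      - rewrite mem_cat yp /= !index_cat yp (negbTE unp) /= eqxx addn0.
        by rewrite index_mem yp !orbT.
    * have := Ha x y xp axy; rewrite in_cons.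
      case/orP => [/orP[/eqP -> | -> //] | /andP[yp h]].
      - by rewrite mem_cat mem_head orbT Hc //= orbT.
      - by rewrite mem_cat yp /= !index_cat yp xp h orbT.
- move=> vis u; exists [::]; split => //; split => //.
  by move=> x; rewrite orbF.
- move=> vis u w ns vis' t wv _ [p [Hi Hs]]; exists p; split => //.
  move=> z; rewrite in_cons => /orP[/eqP -> | /Hs //].
  by case: Hi => Hm _ _ _; rewrite Hm wv.
- move=> vis u w ns vis1 t1 vis2 t2 wnv _ IH1 _ [p2 [[Hm2 Hd2 Hc2 Ha2] Hs2]].
  have [p1 [[Hm1 Hd1 Hc1 Ha1] wp1]] := IH1 wnv.
  set t := (u, w) :: t1 ++ t2.
  have s1 : {subset t1 <= t} by move=> z zt; rewrite /t in_cons mem_cat zt orbT.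
  have s2 : {subset t2 <= t} by move=> z zt; rewrite /t in_cons mem_cat zt !orbT.
  exists (p1 ++ p2); split; last first.
    move=> z; rewrite in_cons => /orP[/eqP -> | /Hs2 //].
    by rewrite Hm2 Hm1 wp1 orbT.
  split.
  + by move=> x; rewrite Hm2 Hm1 mem_cat orbA.
  + move=> x; rewrite mem_cat => /orP[/Hd1 // | xp2].
    by have := Hd2 x xp2; rewrite Hm1 negb_or => /andP[].
  + move=> x; rewrite mem_cat => /orP[xp1 | xp2].
    * apply: (connect_trans (y := w)); first by apply: connect1; rewrite /trel /t mem_head.
      exact: (trel_mono s1 (Hc1 x xp1)).
    * exact: (trel_mono s2 (Hc2 x xp2)).
  + move=> x y; rewrite mem_cat => /orP[xp1 | xp2] axy.
    * have := Ha1 x y xp1 axy; case/orP => [-> // | /andP[yp1 h]].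
      rewrite mem_cat yp1 /= !index_cat yp1 xp1 /=.
      by case/orP: h => [/(trel_mono s1) -> | -> ]; rewrite ?orbT.
    * have xnp1 : x \notin p1 by have := Hd2 x xp2; rewrite Hm1 negb_or => /andP[].
      have := Ha2 x y xp2 axy; rewrite Hm1 => /orP[/orP[-> // | yp1] | /andP[yp2 h]].
      - rewrite mem_cat yp1 /= !index_cat yp1 (negbTE xnp1).
        by rewrite (leq_trans _ (leq_addr _ _)) ?index_mem ?orbT.
      - have ynp1 : y \notin p1 by have := Hd2 y yp2; rewrite Hm1 negb_or => /andP[].
        rewrite mem_cat yp2 orbT /= !index_cat (negbTE ynp1) (negbTE xnp1) ltn_add2l.
        by case/orP: h => [/(trel_mono s2) -> | ->]; rewrite ?orbT.
Qed.

Lemma rank_le (S : rel V) (rk : V -> nat) :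
  (forall a b, S a b -> rk b < rk a) ->
  forall y x, connect S y x -> rk x <= rk y.
Proof.
move=> h y x /connectP[s ps ->]; elim: s y ps => //= z s IH y /andP[syz ps].
exact: leq_trans (IH z ps) (ltnW (h _ _ syz)).
Qed.

End Aux.

Theorem mainTheorem5 (V : finType) (arc : rel V) (r : V) (T : rel V)
    (VH : {set V}) (EH : rel V) (chiA chi : nat) :
  loopless arc ->
  strongly_connected arc ->
  is_DFS_tree arc r T ->
  connected_subdigraph T VH EH ->
  is_acyclic_chromatic_number arc VH chiA ->
  is_chromatic_number VH (GH_edge arc T VH) chi ->
  chiA <= chi.
Proof.
move=> _ sc [vis [t [hd hT]]] _ [_ minA] [[f [fb fp]] _].
have [p [[_ _ _ Ha] rp]] := (dfs_inv arc).1 _ _ _ _ hd (isT : r \notin [::]).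
have allp : forall x, x \in p.
  move=> x; have /connectP[s ps ->] := sc r x.
  clear hd; elim: s r rp ps => //= z s IH y yp /andP[ayz ps]; apply: IH ps.
  by have := Ha y z yp ayz; rewrite in_nil /= => /andP[].
have eT : connect (trel t) =2 connect T by apply: eq_connect => a b; rewrite hT.
have key : forall x y, arc x y -> connect T y x || (index y p < index x p).
  move=> x y axy; have := Ha x y (allp x) axy; rewrite in_nil /= => /andP[_].
  by rewrite eT.
apply: (minA chi f); split => // i.
apply/negP => /existsP[x /existsP[y /andP[axy cyx]]].
set S := [set z in VH | f z == i] in axy cyx.
have hS : forall a b, induced_arc arc S a b -> index b p < index a p.
  move=> a b /and3P[aS bS ab].
  move: aS bS; rewrite !inE => /andP[aV /eqP fa] /andP[bV /eqP fb'].
  have := key a b ab; case/orP => // cba.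
  have := fp a b aV bV; rewrite /GH_edge aV bV /backward_arc /descendant ab cba /=.
  by rewrite fa fb' eqxx => /(_ isT).
have := rank_le hS cyx; have := hS _ _ axy.
by move=> h1 h2; have := leq_trans h1 h2; rewrite ltnn.
Qed.
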